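(* Let $n\ge 2$, let $(\pi,w)$ and $(\sigma,u)$ be threshold pairs of size $n$, and let $G_1=T(\pi,w)$ and $G_2=T(\sigma,u)$. Then $G_1=G_2$ as labeled graphs if and only if both of the following hold: (a) $w_k=u_k$ for all $k\ge 2$; (b) for every $1\le i\le n$, letting $j$ be the position of $i$ in $\pi$ (i.e. $\pi_j=i$) and $k$ the position of $i$ in $\sigma$ (i.e. $\sigma_k=i$), either $1\in\{j,k\}$ and $w_\ell=w_{\max\{j,k\}}$ for all $1<\ell\le\max\{j,k\}$, or for every $\ell$ with $\min\{j,k\}\le\ell\le\max\{j,k\}$ we have $w_\ell=w_j=w_k$.
   Context: Let $\mathcal{S}_n$ be the set of permutations of $\{1,\dots,n\}$ in one-line notation $\pi=\pi_1\cdots\pi_n$. A threshold pair of size $n$ is a pair $(\pi,w)$ with $\pi\in\mathcal{S}_n$ and $w=w_1\cdots w_n\in\{+1,-1\}^n$. The labeled graph $T(\pi,w)$ on vertex set $\{1,\dots,n\}$ is defined as follows: $G_1$ is the graph with the single vertex $\pi_1$; for $2\le i\le n$, $G_i$ is obtained from $G_{i-1}$ by adding a new vertex $\pi_i$ which is adjacent to every vertex of $G_{i-1}$ if $w_i=+1$ and is isolated if $w_i=-1$; then $T(\pi,w)=G_n$. Two labeled graphs on $\{1,\dots,n\}$ are equal if they have the same edge set. *)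

(* Defs.v *)
From mathcomp Require Import all_boot all_fingroup.
Set Implicit Arguments. Unset Strict Implicit. Unset Printing Implicit Defensive.

(* Conventions:
   - vertices {1,...,n} are represented by 'I_n = {0,...,n-1} (label i <-> i-1);
   - positions 1..n in one-line notation are represented by 0..n-1, so the
     one-line notation pi_1 ... pi_n is (pi 0) ... (pi (n-1)) for pi : 'S_n;
   - signs: true = +1, false = -1; a sign word w is a function 'I_n -> bool;
   - a labeled graph is given by its edge set, a set of 2-element subsets. *)

Fixpoint Tedges (n : nat) (pi : 'S_n) (w : 'I_n -> bool) (i : nat)
  : {set {set 'I_n}} :=
  match i with
  | 0 => set0
  | i'.+1 =>
      Tedges pi w i' :|:
      [set [set pi a; pi b] | a in 'I_n, b in 'I_n
                            & (a < b)%N && (nat_of_ord b == i') && w b]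
  end.

Definition T (n : nat) (pi : 'S_n) (w : 'I_n -> bool) : {set {set 'I_n}} :=
  Tedges pi w n.

(* Main.v *)
Require Import Defs.
From mathcomp Require Import all_boot all_fingroup.
Set Implicit Arguments. Unset Strict Implicit. Unset Printing Implicit Defensive.

Lemma memTedges n (pi : 'S_n) (w : 'I_n -> bool) i e :
  e \in Tedges pi w i <->
  exists a b : 'I_n, [/\ (a < b)%N, (b < i)%N, w b & e = [set pi a; pi b]].
Proof.
elim: i e => [|i IH] e /=.
  rewrite inE; split => // -[a [b [_ ]]]; by [].
rewrite in_setU; split.
  case/orP => [/IH [a [b [h1 h2 h3 h4]]] | /imset2P [a b _]].
    by exists a, b; split => //; apply: ltnW.
  rewrite inE /= => /andP [/andP [h1 /eqP h2] h3] ->.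
  by exists a, b; split => //; rewrite h2.
move=> [a [b [h1 h2 h3 ->]]].
rewrite ltnS leq_eqVlt in h2; case/orP: h2 => h2.
  apply/orP; right; apply/imset2P; exists a b => //.
  by rewrite inE h1 h2 h3.
by apply/orP; left; apply/IH; exists a, b.
Qed.

Lemma memT n (pi : 'S_n) (w : 'I_n -> bool) e :
  e \in T pi w <->
  exists a b : 'I_n, [/\ (a < b)%N, w b & e = [set pi a; pi b]].
Proof.
rewrite /T; split.
  by move/memTedges => -[a [b [h1 h2 h3 h4]]]; exists a, b.
by move=> -[a [b [h1 h3 h4]]]; apply/memTedges; exists a, b.
Qed.

Definition adj n (pi : 'S_n) (w : 'I_n -> bool) (x y : 'I_n) : bool :=
  w (if ((pi^-1)%g x <= (pi^-1)%g y)%N then (pi^-1)%g y else (pi^-1)%g x).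

Lemma set2_eq (T : finType) (x y c d : T) :
  [set x; y] = [set c; d] -> (x = c /\ y = d) \/ (x = d /\ y = c).
Proof.
move=> H.
have hx : x \in [set c; d] by rewrite -H set21.
have hy : y \in [set c; d] by rewrite -H set22.
have hc : c \in [set x; y] by rewrite H set21.
have hd : d \in [set x; y] by rewrite H set22.
case/set2P: hx => ex; case/set2P: hy => ey; subst; auto.
  by case/set2P: hd => ->; auto.
by case/set2P: hc => ->; auto.
Qed.

Lemma adj_T n (pi : 'S_n) w x y :
  x != y -> adj pi w x y -> [set x; y] \in T pi w.
Proof.
rewrite /adj => hxy; case: leqP => hab hw; apply/memT.
  exists ((pi^-1)%g x), ((pi^-1)%g y); split => //; last by rewrite !permKV.
  by rewrite ltn_neqAle hab andbT (inj_eq val_inj) (inj_eq perm_inj).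
exists ((pi^-1)%g y), ((pi^-1)%g x); split => //.
by rewrite !permKV setUC.
Qed.

Lemma T_adj n (pi : 'S_n) w x y :
  [set x; y] \in T pi w -> adj pi w x y.
Proof.
move/memT => [a [b [hab hw he]]].
case: (set2_eq he) => [[-> ->]|[-> ->]]; rewrite /adj !permK.
  by rewrite (ltnW hab).
by rewrite leqNgt hab.
Qed.

Lemma T_sub n (pi sigma : 'S_n) w u :
  (forall x y, x != y -> adj pi w x y -> adj sigma u x y) ->
  T pi w \subset T sigma u.
Proof.
move=> H; apply/subsetP => e /[dup] he /memT [a [b [hab hw ee]]].
have hxy : pi a != pi b.
  by rewrite (inj_eq perm_inj) -(inj_eq val_inj) /= neq_ltn hab.
rewrite ee; apply: adj_T => //; apply: H => //; apply: T_adj.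
by rewrite -ee.
Qed.

Lemma adjC n (pi : 'S_n) w x y : adj pi w x y = adj pi w y x.
Proof.
rewrite /adj; case: leqP => h1; case: leqP => h2 //.
suff -> : (pi^-1)%g x = (pi^-1)%g y by [].
by apply/val_inj/eqP; rewrite eqn_leq h1 h2.
by move: (ltn_trans h1 h2); rewrite ltnn.
Qed.

Lemma T_eq_adj n (pi sigma : 'S_n) w u :
  T pi w = T sigma u <-> forall x y, x != y -> adj pi w x y = adj sigma u x y.
Proof.
split.
  move=> E x y hxy; apply/idP/idP => h.
    by apply: T_adj; rewrite -E; apply: adj_T.
  by apply: T_adj; rewrite E; apply: adj_T.
move=> H; apply/eqP; rewrite eqEsubset; apply/andP; split; apply: T_sub.
  by move=> x y hxy; rewrite H.
by move=> x y hxy; rewrite H.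
Qed.

From mathcomp Require Import zify.

Lemma ifmaxL n (a b : 'I_n) : (b <= a)%N -> (if (a <= b)%N then b else a) = a.
Proof.
move=> h; case: ifP => // h2; apply/val_inj/eqP; by rewrite eqn_leq h h2.
Qed.

Lemma ifmaxR n (a b : 'I_n) : (a <= b)%N -> (if (a <= b)%N then b else a) = b.
Proof. by move=> ->. Qed.

Lemma keyK n (pi sigma : 'S_n) w u
  (H : forall x y, x != y -> adj pi w x y = adj sigma u x y) (m y : 'I_n) :
  (0 < m)%N -> ((pi^-1)%g y <= m)%N ->
  (forall z, ((pi^-1)%g z <= m)%N -> ((sigma^-1)%g z <= (sigma^-1)%g y)%N) ->
  w m = u ((sigma^-1)%g y).
Proof.
move=> m0 hy hmax.
have zero : (0 < n)%N by apply: ltn_trans m0 (ltn_ord m).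
set x := pi m.
have Px : (pi^-1)%g x = m by rewrite /x permK.
case: (eqVneq x y) => [exy | nxy].
  set z := pi (Ordinal zero).
  have Pz : (pi^-1)%g z = Ordinal zero by rewrite /z permK.
  have nxz : x != z.
    by rewrite (inj_eq perm_inj) -(inj_eq val_inj) /= -lt0n.
  have := H x z nxz; rewrite /adj Px Pz ifmaxL // exy ifmaxL //.
  by apply: hmax; rewrite Pz.
have := H x y nxy; rewrite /adj Px ifmaxL // ifmaxR //.
by apply: hmax; rewrite Px.
Qed.

Lemma keyK' n (pi sigma : 'S_n) w u
  (H : forall x y, x != y -> adj pi w x y = adj sigma u x y) (m y : 'I_n) :
  (0 < m)%N -> ((sigma^-1)%g y <= m)%N ->
  (forall z, ((sigma^-1)%g z <= m)%N -> ((pi^-1)%g z <= (pi^-1)%g y)%N) ->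
  u m = w ((pi^-1)%g y).
Proof.
apply: keyK => x0 y0 h; by rewrite H.
Qed.

Lemma argmax n (p q : 'S_n) (m x0 : 'I_n) : ((p^-1)%g x0 <= m)%N ->
  exists y, ((p^-1)%g y <= m)%N /\
    forall z, ((p^-1)%g z <= m)%N -> ((q^-1)%g z <= (q^-1)%g y)%N.
Proof.
move=> h.
case: (@arg_maxnP _ x0 (fun z => ((p^-1)%g z <= m)%N)
        (fun y => nat_of_ord ((q^-1)%g y)) h) => y hy hmax.
by exists y.
Qed.

Lemma pigeon n (p q : 'S_n) (m : 'I_n) :
  exists z, ((p^-1)%g z <= m)%N /\ (m <= (q^-1)%g z)%N.
Proof.
case: (boolP [exists z, ((p^-1)%g z <= m)%N && (m <= (q^-1)%g z)%N]).
  by move=> /existsP [z /andP [h1 h2]]; exists z.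
rewrite negb_exists => /forallP hn; exfalso.
have hlt : forall i : 'I_m.+1,
    ((q^-1)%g (p (widen_ord (ltn_ord m) i)) < m)%N.
  move=> i; move: (hn (p (widen_ord (ltn_ord m) i))).
  have hi : (i <= m)%N := ltn_ord i.
  by rewrite permK /= hi /= -ltnNge.
pose f := fun i : 'I_m.+1 => (Ordinal (hlt i) : 'I_m).
have finj : injective f.
  move=> i j /(congr1 val) /= /val_inj /perm_inj /perm_inj /(congr1 val) /=.
  by move/val_inj.
by have := leq_card f finj; rewrite !card_ord ltnn.
Qed.

Lemma partA n (pi sigma : 'S_n) w u
  (H : forall x y, x != y -> adj pi w x y = adj sigma u x y) (m : 'I_n) :
  (0 < m)%N -> w m = u m.
Proof.
move=> m0.
have [z0 [hz0a hz0b]] := pigeon pi sigma m.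
have [y [hy hmax]] := argmax sigma hz0a.
have e1 := keyK H m0 hy hmax.
have [z1 [hz1a hz1b]] := pigeon sigma pi m.
have [y' [hy' hmax']] := argmax pi hz1a.
have e2 := keyK' H m0 hy' hmax'.
have Qy : (m <= (sigma^-1)%g y)%N := leq_trans hz0b (hmax z0 hz0a).
have Py : (m <= (pi^-1)%g y')%N := leq_trans hz1b (hmax' z1 hz1a).
rewrite leq_eqVlt in Qy; case/orP: Qy => [/eqP e | lt1].
  by rewrite e1 (_ : (sigma^-1)%g y = m) //; apply: val_inj.
rewrite leq_eqVlt in Py; case/orP: Py => [/eqP e | lt2].
  by rewrite e2 (_ : (pi^-1)%g y' = m) //; apply: val_inj.
have hyy : y' != y.
  by apply/eqP => e; move: hy; rewrite -e leqNgt lt2.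
have := H y' y hyy; rewrite /adj ifmaxL; last by apply: leq_trans hy (ltnW lt2).
rewrite ifmaxR; last by apply: leq_trans hy' (ltnW lt1).
by rewrite e1 e2 => ->.
Qed.

Definition mxo n (p q : 'S_n) (x : 'I_n) : 'I_n :=
  if ((p^-1)%g x <= (q^-1)%g x)%N then (q^-1)%g x else (p^-1)%g x.
Definition mno n (p q : 'S_n) (x : 'I_n) : 'I_n :=
  if ((p^-1)%g x <= (q^-1)%g x)%N then (p^-1)%g x else (q^-1)%g x.

Lemma mno_mxo n (p q : 'S_n) x : (mno p q x <= mxo p q x)%N.
Proof. rewrite /mno /mxo; case: (leqP ((p^-1)%g x) ((q^-1)%g x)) => h //; exact: ltnW. Qed.

Lemma partB n (pi sigma : 'S_n) w u
  (H : forall x y, x != y -> adj pi w x y = adj sigma u x y)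
  (Ha : forall k : 'I_n, (0 < k)%N -> w k = u k) :
  forall (m x : 'I_n), (0 < m)%N -> (mno pi sigma x <= m)%N ->
    (m <= mxo pi sigma x)%N -> w m = w (mxo pi sigma x).
Proof.
move=> m; have [d] := ubnP (n - m); elim: d m => [|d IH] m hd x m0 h1 h2.
  by [].
rewrite /mno /mxo in h1 h2 *.
case: (leqP ((pi^-1)%g x) ((sigma^-1)%g x)) h1 h2 => hpq h1 h2.
  rewrite leq_eqVlt in h2; case/orP: h2 => [/eqP e | h2].
    by rewrite (_ : m = (sigma^-1)%g x) //; apply: val_inj.
  have [y [hy hmax]] := argmax sigma h1.
  have e1 := keyK H m0 hy hmax.
  have Qxy := hmax x h1.
  rewrite e1; rewrite leq_eqVlt in Qxy; case/orP: Qxy => [/eqP e | lt].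
    rewrite (_ : (sigma^-1)%g y = (sigma^-1)%g x); last by apply: val_inj.
    by rewrite Ha //; apply: leq_ltn_trans h2.
  have hk : (0 < (sigma^-1)%g x)%N by apply: leq_ltn_trans h2.
  have := IH ((sigma^-1)%g x) _ y hk.
  rewrite /mno /mxo.
  have hyy : ((pi^-1)%g y <= (sigma^-1)%g y)%N.
    apply: leq_trans hy _; apply: leq_trans (ltnW h2) (ltnW lt).
  rewrite hyy -Ha; last by apply: leq_ltn_trans lt.
  move=> -> //.
  - have := ltn_ord ((sigma^-1)%g x); lia.
  - apply: leq_trans hy (ltnW h2).
  - exact: ltnW.
rewrite leq_eqVlt in h2; case/orP: h2 => [/eqP e | h2].
  by rewrite (_ : m = (pi^-1)%g x) //; apply: val_inj.
have [y [hy hmax]] := argmax pi h1.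
have e1 := keyK' H m0 hy hmax.
have Pxy := hmax x h1.
rewrite Ha // e1; rewrite leq_eqVlt in Pxy; case/orP: Pxy => [/eqP e | lt].
  rewrite (_ : (pi^-1)%g y = (pi^-1)%g x) //; by apply: val_inj.
have hk : (0 < (pi^-1)%g x)%N by apply: leq_ltn_trans h2.
have := IH ((pi^-1)%g x) _ y hk.
rewrite /mno /mxo.
have hyy : ((sigma^-1)%g y < (pi^-1)%g y)%N.
  apply: leq_ltn_trans hy _; apply: ltn_trans h2 lt.
rewrite (leqNgt ((pi^-1)%g y)) hyy /=.
move=> -> //.
- have := ltn_ord ((pi^-1)%g x); lia.
- apply: leq_trans hy (ltnW h2).
- exact: ltnW.
Qed.

Lemma partBinv n (pi sigma : 'S_n) w u
  (Ha : forall k : 'I_n, (0 < k)%N -> w k = u k)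
  (Hb : forall (x m : 'I_n), (0 < m)%N -> (mno pi sigma x <= m)%N ->
    (m <= mxo pi sigma x)%N -> w m = w (mxo pi sigma x)) :
  forall x y, x != y -> adj pi w x y = adj sigma u x y.
Proof.
have btw1 : forall v m : 'I_n, (0 < m)%N -> ((pi^-1)%g v <= m)%N ->
    (m <= (sigma^-1)%g v)%N -> w m = w ((sigma^-1)%g v).
  move=> v m m0 h1 h2; have := Hb v m m0.
  by rewrite /mno /mxo (leq_trans h1 h2); apply.
have btw2 : forall v m : 'I_n, (0 < m)%N -> ((sigma^-1)%g v <= m)%N ->
    (m <= (pi^-1)%g v)%N -> w m = w ((pi^-1)%g v).
  move=> v m m0 h1 h2; have := Hb v m m0.
  rewrite /mno /mxo; case: (leqP ((pi^-1)%g v) ((sigma^-1)%g v)) => h.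
    move=> _; rewrite (_ : m = (pi^-1)%g v) //; apply/val_inj/eqP.
    by rewrite eqn_leq h2 (leq_trans h h1).
  by apply.
have main : forall x y, ((pi^-1)%g x < (pi^-1)%g y)%N ->
    adj pi w x y = adj sigma u x y.
  move=> x y hp.
  have hxy : x != y by apply/eqP => e; move: hp; rewrite e ltnn.
  have hq : (sigma^-1)%g x != (sigma^-1)%g y by rewrite (inj_eq perm_inj).
  rewrite /adj ifmaxR; last exact: ltnW.
  case: (leqP ((sigma^-1)%g x) ((sigma^-1)%g y)) => hq2.
    have hq3 : ((sigma^-1)%g x < (sigma^-1)%g y)%N.
      by rewrite ltn_neqAle -(inj_eq val_inj) /= in hq *; rewrite hq hq2.
    rewrite -Ha; last by apply: leq_ltn_trans hq3.
    case: (leqP ((pi^-1)%g y) ((sigma^-1)%g y)) => h.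
      by apply: btw1 => //; apply: leq_ltn_trans hp.
    by rewrite (btw2 y ((sigma^-1)%g y)) //; [apply: leq_ltn_trans hq3 | apply: ltnW].
  rewrite -Ha; last by apply: leq_ltn_trans hq2.
  case: (leqP ((pi^-1)%g y) ((sigma^-1)%g x)) => h.
    by apply: btw1 => //; [apply: leq_ltn_trans hp | apply: ltnW].
  by rewrite (btw2 y ((sigma^-1)%g x)) //; [apply: leq_ltn_trans hq2 | apply: ltnW | apply: ltnW].
move=> x y hxy.
case: (ltngtP ((pi^-1)%g x) ((pi^-1)%g y)) => h.
- exact: main.
- by rewrite adjC [adj sigma u x y]adjC; apply: main.
- have e : x = y by apply: (@perm_inj _ (pi^-1)%g); apply: val_inj.
  by move: hxy; rewrite e eqxx.
Qed.

Theorem lemma3 (n : nat) (pi sigma : 'S_n) (w u : 'I_n -> bool) :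
  (2 <= n)%N ->
  (T pi w = T sigma u <->
   ((forall k : 'I_n, (0 < k)%N -> w k = u k) /\
    (forall i : 'I_n,
       let j := (pi^-1)%g i in
       let k := (sigma^-1)%g i in
       let mx := if (j <= k)%N then k else j in
       let mn := if (j <= k)%N then j else k in
       ((nat_of_ord j = 0%N \/ nat_of_ord k = 0%N) /\
        (forall l : 'I_n, (0 < l)%N -> (l <= mx)%N -> w l = w mx))
       \/
       (forall l : 'I_n, (mn <= l)%N -> (l <= mx)%N -> w l = w j /\ w j = w k)))).
Proof.
move=> n2; rewrite T_eq_adj; split.
  move=> H; have Ha := partA H; split; first by move=> k k0; apply: Ha.
  have HB := partB H Ha.
  move=> i /=.
  rewrite -/(mxo pi sigma i) -/(mno pi sigma i).
  case: (posnP (mno pi sigma i)) => [h0 | hpos].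
    left; split.
      by move: h0; rewrite /mno; case: ifP => _ ->; auto.
    move=> l l0 hl; apply: HB => //; by rewrite h0.
  right => l h1 h2.
  have e := HB l i (leq_trans hpos h1) h1 h2.
  have emn := HB (mno pi sigma i) i hpos (leqnn _) (mno_mxo _ _ _).
  move: e emn; rewrite /mno /mxo; case: ifP => _ e emn; split; congruence.
move=> [Ha Hb]; apply: partBinv => //.
move=> x m m0 h1 h2.
have := Hb x; rewrite /= -/(mxo pi sigma x) -/(mno pi sigma x).
case=> [[_ h] | h]; first by apply: h.
have [e1 _] := h m h1 h2.
have [e3 _] := h (mxo pi sigma x) (mno_mxo _ _ _) (leqnn _).
by rewrite e1 e3.
Qed.
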